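(* Let $\mathcal H$ be a family of graphs. The following are equivalent: (i) there is a constant $c=c(\mathcal H)$ such that every connected $\mathcal H$-free graph $G$ has fewer than $c$ vertices $v$ for which $G[N(v)]$ has at least $2$ connected components; (ii) there is a positive integer $n$ such that $\mathcal H\le \{K_n^*,\ K_{1,n}^*,\ P_n,\ K_{2,n},\ CK_n,\ T_n\}$.
   Context: All graphs are finite, simple, undirected. For graphs $H_1,H_2$, write $H_1\prec H_2$ if $H_2$ contains an induced subgraph isomorphic to $H_1$. A graph $G$ is $\mathcal H$-free if no $H\in\mathcal H$ satisfies $H\prec G$. For families $\mathcal H_1,\mathcal H_2$, write $\mathcal H_1\le\mathcal H_2$ if for every $H_2\in\mathcal H_2$ there is $H_1\in\mathcal H_1$ with $H_1\prec H_2$. $N(v)$ is the neighborhood of $v$ and $G[S]$ the induced subgraph. $K_n$, $E_n$, $P_n$ are the complete graph, edgeless graph, and path on $n$ vertices; $K_{s,t}$ is the complete bipartite graph; $G_1+G_2$ is the join (disjoint union plus all edges between $V(G_1)$ and $V(G_2)$). $K_{1,n}^*$ is obtained from the star $K_{1,n}$ by attaching a new pendant vertex to each leaf; $K_n^*$ is obtained from $K_n$ by attaching a new pendant vertex to each vertex; $CK_n$ is obtained from two disjoint copies of $K_n$ by adding a perfect matching between them; $T_n$ is obtained from the join $K_n+E_n$ by adding one new vertex adjacent to exactly the $n$ vertices of $E_n$. *)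

(* Defs.v *)
From mathcomp Require Import all_boot all_order.
Set Implicit Arguments. Unset Strict Implicit. Unset Printing Implicit Defensive.

Record graph := Graph {
  gV :> finType;
  gE : rel gV;
  gsym : symmetric gE;
  girr : irreflexive gE }.

Definition sgrel (T : finType) (r : rel T) : rel T :=
  fun x y => (x != y) && (r x y || r y x).

Lemma sgrel_sym (T : finType) (r : rel T) : symmetric (sgrel r).
Proof. by move=> x y; rewrite /sgrel eq_sym orbC. Qed.

Lemma sgrel_irr (T : finType) (r : rel T) : irreflexive (sgrel r).
Proof. by move=> x; rewrite /sgrel eqxx. Qed.

Definition mkgraph (T : finType) (r : rel T) : graph :=
  @Graph T (sgrel r) (@sgrel_sym T r) (@sgrel_irr T r).

Definition induced_sub (H1 H2 : graph) : Prop :=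
  exists f : gV H1 -> gV H2, injective f /\ forall x y, gE (f x) (f y) = gE x y.

Definition gfamily := graph -> Prop.

Definition Hfree (F : gfamily) (G : graph) : Prop :=
  forall H, F H -> ~ induced_sub H G.

Definition family_le (F1 F2 : gfamily) : Prop :=
  forall H2, F2 H2 -> exists2 H1, F1 H1 & induced_sub H1 H2.

Definition connected (G : graph) : Prop := forall x y : G, connect (@gE G) x y.

Definition nbhd (G : graph) (v : G) : {set G} := [set u | gE v u].

Definition nbhd_rel (G : graph) (v : G) : rel G :=
  fun x y => [&& gE x y, x \in nbhd v & y \in nbhd v].

(* G[N(v)] has at least 2 connected components: two vertices of N(v)
   not joined by a path inside G[N(v)]. *)
Definition multi_comp_nbhd (G : graph) (v : G) : bool :=
  [exists u : G, exists w : G,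
     [&& u \in nbhd v, w \in nbhd v & ~~ connect (nbhd_rel v) u w]].

(* K_n^* : inl i = clique vertex i, inr i = its pendant vertex *)
Definition Kstar_r n : rel ('I_n + 'I_n)%type := fun x y =>
  match x, y with
  | inl _, inl _ => true
  | inl i, inr j => i == j
  | _, _ => false
  end.
Definition Kstar n : graph := mkgraph (@Kstar_r n).

(* K_{1,n}^* : None = centre, inl i = leaf i, inr i = pendant of leaf i *)
Definition K1star_r n : rel (option ('I_n + 'I_n)) := fun x y =>
  match x, y with
  | None, Some (inl _) => true
  | Some (inl i), Some (inr j) => i == j
  | _, _ => false
  end.
Definition K1star n : graph := mkgraph (@K1star_r n).

Definition P_r n : rel 'I_n := fun i j => j == i.+1 :> nat.
Definition Pn n : graph := mkgraph (@P_r n).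

Definition K2n_r n : rel ('I_2 + 'I_n)%type := fun x y =>
  match x, y with
  | inl _, inr _ => true
  | _, _ => false
  end.
Definition K2n n : graph := mkgraph (@K2n_r n).

(* CK_n : two copies of K_n plus the perfect matching inl i -- inr i *)
Definition CK_r n : rel ('I_n + 'I_n)%type := fun x y =>
  match x, y with
  | inl _, inl _ => true
  | inr _, inr _ => true
  | inl i, inr j => i == j
  | _, _ => false
  end.
Definition CK n : graph := mkgraph (@CK_r n).

(* T_n : K_n + E_n (inl = K_n part, inr = E_n part), plus None adjacent to E_n *)
Definition T_r n : rel (option ('I_n + 'I_n)) := fun x y =>
  match x, y with
  | Some (inl _), Some (inl _) => true
  | Some (inl _), Some (inr _) => true
  | None, Some (inr _) => true
  | _, _ => false
  end.
Definition Tn n : graph := mkgraph (@T_r n).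

Definition special_family (n : nat) : gfamily := fun G =>
  G = Kstar n \/ G = K1star n \/ G = Pn n \/ G = K2n n \/ G = CK n \/ G = Tn n.

(* Main.v *)
Require Import Defs.
From mathcomp Require Import all_boot all_order.
From Stdlib Require Import Classical.
From mathcomp Require Import zify.
Set Implicit Arguments. Unset Strict Implicit. Unset Printing Implicit Defensive.

Lemma ramsey2 (T : eqType) (r : rel T) a b (s : seq T) :
  2 ^ (a + b) <= size s ->
  exists t, subseq t s /\
   ((pairwise r t /\ a <= size t) \/ (pairwise (fun x y => ~~ r x y) t /\ b <= size t)).
Proof.
elim: a b s => [|a IHa] b s hs.
  by exists [::]; split; [exact: sub0seq | left].
elim: b s hs => [|b IHb] s hs.
  by exists [::]; split; [exact: sub0seq | right].
case: s hs => [|x s0] hs; first by rewrite /= leqn0 expn_eq0 in hs.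
set s1 := filter (r x) s0; set s2 := filter (predC (r x)) s0.
have hsz : size s1 + size s2 = size s0 by rewrite /s1 /s2 !size_filter count_predC.
have : 2 ^ (a + b.+1) <= size s1 \/ 2 ^ (a.+1 + b) <= size s2.
  have E1 : 2 ^ (a.+1 + b.+1) = 4 * 2 ^ (a + b) by rewrite addSn addnS !expnS; lia.
  have E2 : 2 ^ (a + b.+1) = 2 * 2 ^ (a + b) by rewrite addnS expnS.
  have E3 : 2 ^ (a.+1 + b) = 2 * 2 ^ (a + b) by rewrite addSn expnS.
  move: hs; rewrite /= E1 E2 E3; lia.
case=> [h1|h2].
- have [t [st [[pt ht]|[pt ht]]]] := IHa _ _ h1.
  + exists (x :: t); split.
      by rewrite /= eqxx; apply: subseq_trans st (filter_subseq _ _).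
    left; split; last by rewrite /=.
    rewrite pairwise_cons pt andbT; apply/allP => y /(mem_subseq st).
    by rewrite mem_filter => /andP[].
  + exists t; split; last by right.
    apply: subseq_trans st _; apply: subseq_trans (filter_subseq _ _) _.
    exact: subseq_cons.
- have [t [st [[pt ht]|[pt ht]]]] := IHb _ h2.
  + exists t; split; last by left.
    apply: subseq_trans st _; apply: subseq_trans (filter_subseq _ _) _.
    exact: subseq_cons.
  + exists (x :: t); split.
      by rewrite /= eqxx; apply: subseq_trans st (filter_subseq _ _).
    right; split; last by rewrite /=.
    rewrite pairwise_cons pt andbT; apply/allP => y /(mem_subseq st).
    by rewrite mem_filter => /andP[].
Qed.

Lemma ramsey (T : eqType) (r : rel T) k (s : seq T) :
  2 ^ (k + k) <= size s ->
  exists t (bb : bool), [/\ subseq t s, pairwise (fun x y => r x y == bb) t & k <= size t].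
Proof.
move=> /(ramsey2 r) [t [st [[pt ht]|[pt ht]]]].
  exists t, true; split=> //; apply: sub_pairwise pt => x y ->.
  by [].
exists t, false; split=> //; apply: sub_pairwise pt => x y /negbTE ->.
by [].
Qed.

Lemma induced_trans A B C : induced_sub A B -> induced_sub B C -> induced_sub A C.
Proof.
move=> [f [fi fe]] [g [gi ge]]; exists (g \o f); split.
  exact: inj_comp.
by move=> x y /=; rewrite ge fe.
Qed.

Lemma gE_irr (G : graph) (x : G) : gE x x = false.
Proof. exact: girr. Qed.

Lemma gE_neq (G : graph) (x y : G) : gE x y -> x != y.
Proof. by apply: contraTneq => ->; rewrite gE_irr. Qed.

Lemma inl_eq (A B : eqType) (i j : A) : (@inl A B i == inl j) = (i == j).
Proof. by []. Qed.
Lemma inr_eq (A B : eqType) (i j : B) : (@inr A B i == inr j) = (i == j).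
Proof. by []. Qed.
Lemma some_eq (A : eqType) (i j : A) : (Some i == Some j) = (i == j).
Proof. by []. Qed.

Lemma Kstar_emb (G : graph) n (a b : 'I_n -> G) :
  (forall i j, gE (a i) (a j) = (i != j)) -> (forall i j, gE (b i) (b j) = false) ->
  (forall i j, gE (a i) (b j) = (i == j)) -> (forall i j, a i != b j) ->
  induced_sub (Kstar n) G.
Proof.
move=> haa hbb hab hne.
exists (fun v => match v with inl i => a i | inr i => b i end); split.
  case=> i [] j /=.
  - move=> e; apply/eqP; rewrite inl_eq; apply/negPn/negP => nij.
    by move: (haa i j); rewrite e gE_irr nij.
  - by move=> e; move: (hne i j); rewrite e eqxx.
  - by move=> e; move: (hne j i); rewrite e eqxx.
  - move=> e; apply/eqP; rewrite inr_eq.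
    by move: (hab i i); rewrite e hab eqxx eq_sym.
case=> i [] j; rewrite /= /sgrel /= ?inl_eq ?inr_eq.
- by rewrite haa andbT.
- by rewrite hab; case: (i == j).
- by rewrite gsym hab.
- by rewrite hbb; case: (i != j).
Qed.

Lemma K1star_emb (G : graph) n (z : G) (a b : 'I_n -> G) :
  (forall i, gE z (a i)) -> (forall i, gE z (b i) = false) ->
  (forall i j, gE (a i) (a j) = false) -> (forall i j, gE (b i) (b j) = false) ->
  (forall i j, gE (a i) (b j) = (i == j)) -> (forall i, z != b i) ->
  induced_sub (K1star n) G.
Proof.
move=> hza hzb haa hbb hab hne.
exists (fun v => match v with None => z | Some (inl i) => a i | Some (inr i) => b i end); split.
  case=> [[i|i]|] [[j|j]|] //= e.
  - apply/eqP; rewrite some_eq inl_eq.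
    by move: (hab i i); rewrite e hab eqxx eq_sym.
  - by move: (hzb j) (hza i); rewrite e => ->.
  - by move: (hza i); rewrite e gE_irr.
  - by move: (hzb i) (hza j); rewrite e => ->.
  - apply/eqP; rewrite some_eq inr_eq.
    by move: (hab i i); rewrite e hab eqxx.
  - by move: (hne i); rewrite e eqxx.
  - by move: (hza j); rewrite e gE_irr.
  - by move: (hne j); rewrite e eqxx.
case=> [[i|i]|] [[j|j]|]; rewrite /= /sgrel /= ?some_eq ?inl_eq ?inr_eq.
- by rewrite haa; case: (i != j).
- by rewrite hab; case: (i == j).
- by rewrite gsym hza.
- by rewrite gsym hab.
- by rewrite hbb; case: (i != j).
- by rewrite gsym hzb.
- by rewrite hza.
- by rewrite hzb.
- by rewrite gE_irr.
Qed.

Lemma CK_emb (G : graph) n (a b : 'I_n -> G) :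
  (forall i j, gE (a i) (a j) = (i != j)) -> (forall i j, gE (b i) (b j) = (i != j)) ->
  (forall i j, gE (a i) (b j) = (i == j)) -> (forall i j, a i != b j) ->
  induced_sub (CK n) G.
Proof.
move=> haa hbb hab hne.
exists (fun v => match v with inl i => a i | inr i => b i end); split.
  case=> i [] j /=.
  - move=> e; apply/eqP; rewrite inl_eq; apply/negPn/negP => nij.
    by move: (haa i j); rewrite e gE_irr nij.
  - by move=> e; move: (hne i j); rewrite e eqxx.
  - by move=> e; move: (hne j i); rewrite e eqxx.
  - move=> e; apply/eqP; rewrite inr_eq; apply/negPn/negP => nij.
    by move: (hbb i j); rewrite e gE_irr nij.
case=> i [] j; rewrite /= /sgrel /= ?inl_eq ?inr_eq.
- by rewrite haa andbT.
- by rewrite hab; case: (i == j).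
- by rewrite gsym hab.
- by rewrite hbb andbT.
Qed.

Lemma K2n_emb (G : graph) n (u p : G) (w : 'I_n -> G) :
  gE u p = false -> u != p -> (forall i, gE u (w i)) -> (forall i, gE p (w i)) ->
  (forall i j, gE (w i) (w j) = false) -> injective w ->
  induced_sub (K2n n) G.
Proof.
move=> hup hne huw hpw hww winj.
have o2 : forall k k' : 'I_2, (val k == 0) = (val k' == 0) -> k = k'.
  by move=> [[|[|k]] hk] [[|[|k']] hk'] //= _; apply: val_inj.
exists (fun v => match v with inl k => if val k == 0 then u else p | inr i => w i end); split.
  case=> k [] k' /=.
  - case: ifP => k0; case: ifP => k'0 // e.
    + by rewrite (o2 k k') ?k0 ?k'0.
    + by move: hne; rewrite e eqxx.
    + by move: hne; rewrite e eqxx.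
    + by rewrite (o2 k k') ?k0 ?k'0.
  - by case: ifP => _ e; [move: (huw k'); rewrite e gE_irr | move: (hpw k'); rewrite e gE_irr].
  - by case: ifP => _ e; [move: (huw k); rewrite -e gE_irr | move: (hpw k); rewrite -e gE_irr].
  - by move=> /winj ->.
case=> k [] k'; rewrite /= /sgrel /= ?inl_eq ?inr_eq.
- have -> : forall bb, bb && false = false by case.
  by case: (val k == 0); case: (val k' == 0); rewrite ?gE_irr // gsym.
- by case: (val k == 0); [apply: huw | apply: hpw].
- by case: (val k' == 0); rewrite gsym; [apply: huw | apply: hpw].
- by rewrite hww; case: (k != k').
Qed.

Lemma Pn_emb (G : graph) n (f : 'I_n -> G) :
  (forall i j : 'I_n, gE (f i) (f j) = ((nat_of_ord j == (nat_of_ord i).+1) || (nat_of_ord i == (nat_of_ord j).+1))) ->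
  injective f -> induced_sub (Pn n) G.
Proof.
move=> hf finj; exists f; split => // i j.
rewrite /= /sgrel /P_r hf.
case: (eqVneq i j) => [->|nij] /=; last by [].
by rewrite eqn_leq ltnn andbF.
Qed.

Section Dist.
Variable G : graph.
Variable r : G.
Hypothesis Gconn : connected G.

Fixpoint ball k : {set G} :=
  if k is k'.+1 then ball k' :|: [set y | [exists x in ball k', gE x y]] else [set r].

Lemma ball_S k x y : x \in ball k -> gE x y -> y \in ball k.+1.
Proof. by move=> xb e; rewrite /= !inE; apply/orP; right; apply/existsP; exists x; rewrite xb. Qed.

Lemma ball_sub k : ball k \subset ball k.+1.
Proof. by rewrite /= subsetUl. Qed.

Lemma ball_mono k m : k <= m -> ball k \subset ball m.
Proof.
move/subnK <-; elim: (m - k) => [|d IH] //=.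
by apply: subset_trans IH (ball_sub _).
Qed.

Lemma ball_ex y : exists k, y \in ball k.
Proof.
have := Gconn r y; case/connectP => p pth ->.
suff : forall x k, x \in ball k -> path (@gE G) x p -> last x p \in ball (k + size p).
  by move=> h; exists (0 + size p); apply: h => //; rewrite /= inE.
elim: p {pth} => [|z p IH] x k xb /=; first by rewrite addn0.
by case/andP=> e pt; rewrite addnS -addSn; apply: IH pt; apply: ball_S e.
Qed.

Definition dist y := ex_minn (ball_ex y).

Lemma dist_ball y : y \in ball (dist y).
Proof. by rewrite /dist; case: ex_minnP. Qed.

Lemma dist_min y k : y \in ball k -> dist y <= k.
Proof. by rewrite /dist; case: ex_minnP => m _ h /h. Qed.

Lemma dist_edge x y : gE x y -> dist y <= (dist x).+1.
Proof. by move=> e; apply: dist_min; apply: ball_S e; apply: dist_ball. Qed.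

Lemma dist_edge' x y : gE x y -> dist x <= (dist y).+1.
Proof. by rewrite gsym; apply: dist_edge. Qed.

Lemma dist_pred y k : dist y = k.+1 -> exists x, gE x y /\ dist x = k.
Proof.
move=> dy; have := dist_ball y; rewrite dy /= inE => /orP[yk|].
  by have := dist_min yk; rewrite dy ltnn.
rewrite inE => /existsP[x /andP[xk e]]; exists x; split => //.
have := dist_min xk; have := dist_edge e; rewrite dy; lia.
Qed.

Lemma dist_r : dist r = 0.
Proof. by apply/eqP; rewrite -leqn0; apply: dist_min; rewrite /= inE. Qed.

Definition pr (y : G) : G := odflt y [pick x | gE x y && (dist x == (dist y).-1)].

Lemma pr_spec y : 0 < dist y -> gE (pr y) y /\ dist (pr y) = (dist y).-1.
Proof.
move=> dp; rewrite /pr; case: pickP => [x /andP[e /eqP d]|h] //=.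
case: (dist_pred (esym (prednK dp))) => x [e d].
by move: (h x); rewrite e d eqxx.
Qed.

Lemma dist_iter y m : m <= dist y -> dist (iter m pr y) = dist y - m.
Proof.
elim: m => [|m IH] hm /=; first by rewrite subn0.
have IH' := IH (ltnW hm).
have hp : 0 < dist (iter m pr y) by rewrite IH'; lia.
have [_ ->] := pr_spec hp.
rewrite IH'; lia.
Qed.

Lemma long_path n y : n <= (dist y).+1 -> induced_sub (Pn n) G.
Proof.
move=> hn.
pose f (i : 'I_n) := iter (dist y - i) pr y.
have df : forall i : 'I_n, dist (f i) = i.
  by move=> i; rewrite /f dist_iter; have := ltn_ord i; lia.
apply: (@Pn_emb _ _ f).
  move=> i j.
  case: (boolP (nat_of_ord j == (nat_of_ord i).+1)) => [/eqP hj|nj] /=.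
    have -> : f i = pr (f j).
      rewrite /f; have -> : dist y - i = (dist y - j).+1 by have := ltn_ord j; lia.
      by [].
    have hp : 0 < dist (f j) by rewrite df hj.
    by have [] := pr_spec hp.
  case: (boolP (nat_of_ord i == (nat_of_ord j).+1)) => [/eqP hi|ni].
    have -> : f j = pr (f i).
      rewrite /f; have -> : dist y - j = (dist y - i).+1 by have := ltn_ord i; lia.
      by [].
    have hp : 0 < dist (f i) by rewrite df hi.
    by rewrite gsym; have [] := pr_spec hp.
  apply/negP => e.
  have nij : nat_of_ord i != j by apply: contraTneq e => /ord_inj ->; rewrite gE_irr.
  have := dist_edge e; have := dist_edge' e; rewrite !df.
  move: nj ni nij; lia.
by move=> i j e; apply: ord_inj; rewrite -(df i) -(df j) e.
Qed.

End Dist.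

Lemma card_bigcup_le (I T : finType) (F : {set I}) (A : I -> {set T}) :
  #|\bigcup_(i in F) A i| <= \sum_(i in F) #|A i|.
Proof.
elim/big_rec2: _ => [|i m U _ le]; first by rewrite cards0.
by rewrite (leq_trans (leq_card_setU _ _).1) ?leq_add2l.
Qed.

Lemma pw_nth (G : graph) (s : seq G) (f : G -> G) b x0 :
  pairwise (fun u v => gE (f u) (f v) == b) s ->
  forall i j, i < size s -> j < size s -> i != j ->
  gE (f (nth x0 s i)) (f (nth x0 s j)) = b.
Proof.
move=> /(pairwiseP x0) h i j hi hj nij.
case: (ltngtP i j) nij => // lij _.
  by apply/eqP; apply: h.
by rewrite gsym; apply/eqP; apply: h.
Qed.

Lemma match_struct (G : graph) n (z : G) (a b : 'I_n -> G) b1 b2 :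
  (forall i, gE z (a i)) -> (forall i, gE z (b i) = false) -> (forall i, z != b i) ->
  (forall i j, gE (a i) (b j) = (i == j)) -> (forall i j, a i != b j) ->
  (forall i j, i != j -> gE (a i) (a j) = b1) -> (forall i j, i != j -> gE (b i) (b j) = b2) ->
  induced_sub (K1star n) G \/ induced_sub (Kstar n) G \/ induced_sub (CK n) G.
Proof.
move=> hza hzb hzn hab hne haa hbb.
have Haa : forall i j, gE (a i) (a j) = b1 && (i != j).
  by move=> i j; case: (eqVneq i j) => [->|nij]; rewrite ?gE_irr ?andbF // haa // andbT.
have Hbb : forall i j, gE (b i) (b j) = b2 && (i != j).
  by move=> i j; case: (eqVneq i j) => [->|nij]; rewrite ?gE_irr ?andbF // hbb // andbT.
case: b1 Haa {haa} => Haa; case: b2 Hbb {hbb} => Hbb.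
- by right; right; apply: (CK_emb Haa Hbb hab hne).
- by right; left; apply: (Kstar_emb Haa Hbb hab hne).
- right; left; apply: (@Kstar_emb _ _ b a Hbb Haa).
    by move=> i j; rewrite gsym hab eq_sym.
  by move=> i j; rewrite eq_sym.
- by left; apply: (K1star_emb hza hzb Haa Hbb hab hzn).
Qed.

Section LemL.
Variable G : graph.
Variable r : G.
Hypothesis Gconn : connected G.
Variable n : nat.
Variable X : {set G}.
Variable Dd : nat.
Hypothesis hdeg : forall x : G, #|[set y in X | gE x y]| < Dd.
Hypothesis noP : ~ induced_sub (Pn n) G.
Hypothesis noKs : ~ induced_sub (Kstar n) G.
Hypothesis noK1 : ~ induced_sub (K1star n) G.
Hypothesis noCK : ~ induced_sub (CK n) G.

Local Notation dist := (dist r Gconn).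

Definition edesc (x y : G) := gE x y && (dist y == (dist x).+1).
Definition Dset (x : G) := [set y in X | connect edesc x y].

Lemma Dset_edge x c : edesc x c -> Dset c \subset Dset x.
Proof.
move=> e; apply/subsetP => y; rewrite !inE => /andP[-> cy] /=.
by apply: connect_trans cy; apply: connect1.
Qed.

Lemma Dset_split x y : y \in Dset x -> y != x -> exists c, edesc x c /\ y \in Dset c.
Proof.
rewrite inE => /andP[yX /connectP[p pth yl]].
case: p pth yl => [|c p] /= pth yl; first by rewrite yl eqxx.
case/andP: pth => e pth _; exists c; split => //.
by rewrite inE yX /=; apply/connectP; exists p.
Qed.

Lemma dist0 y : dist y = 0 -> y = r.
Proof. by move=> h; have := dist_ball r Gconn y; rewrite h /= inE => /eqP. Qed.

Lemma Dset_r : Dset r = X.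
Proof.
apply/setP => y; rewrite inE andb_idr // => _.
move: {2}(dist y) (erefl (dist y)) => k; elim: k y => [|k IH] y dy.
  by rewrite (dist0 dy) connect0.
have [x [e dx]] := dist_pred dy.
apply: connect_trans (IH x dx) _; apply: connect1.
by rewrite /edesc e dx dy eqxx.
Qed.

Lemma dist_bound y : (dist y).+2 <= n.
Proof.
rewrite ltnNge; apply/negP => h; apply: noP.
exact: (@long_path _ r Gconn n y h).
Qed.

Variable K0 : nat.
Definition B := K0 + Dd.
Definition T t := iter (n.-1 - t) (fun z => B * z + 1) 1.

Lemma T_S t : t < n.-1 -> T t = B * T t.+1 + 1.
Proof. by move=> h; rewrite /T; have -> : n.-1 - t = (n.-1 - t.+1).+1 by lia. Qed.

Lemma T_pos t : 0 < T t.
Proof. by rewrite /T; elim: (n.-1 - t) => //= m _; rewrite addn1. Qed.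

Lemma branching : T 0 <= #|X| ->
  exists x (F : {set G}) (q : G -> G),
   K0 <= #|F| /\
   (forall c, c \in F -> [/\ gE x c, gE c (q c), gE x (q c) = false & x != q c]) /\
   (forall c c', c \in F -> c' \in F ->
       c != q c' /\ (c != c' -> gE (q c) c' = false /\ q c != q c')).
Proof.
move=> hX.
have Dpos : 0 < Dd by apply: leq_ltn_trans (hdeg r).
pose P := [pred y | T (dist y) <= #|Dset y|].
have Pr : P r by rewrite /= dist_r Dset_r.
case: (arg_maxnP (fun y => dist y) Pr) => x Px xmax.
set t := dist x.
have ht : t < n.-1 by have := dist_bound x; rewrite /t; lia.
pose C := [set c | edesc x c].
have Csmall : forall c, c \in C -> #|Dset c| < T t.+1.
  move=> c; rewrite inE => /andP[_ /eqP dc]; rewrite ltnNge; apply/negP => h.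
  have := xmax c; rewrite /= dc h => /(_ isT); rewrite /t; lia.
pose U := Dset x :\ x.
have Ucov : U \subset \bigcup_(c in C) Dset c.
  apply/subsetP => y; rewrite in_setD1 => /andP[nyx yD].
  have [c [e yc]] := Dset_split yD nyx.
  by apply/bigcupP; exists c => //; rewrite inE.
pose cov := [pred F : {set G} | (F \subset C) && (U \subset \bigcup_(c in F) Dset c)].
have covC : cov C by rewrite /= subxx Ucov.
case: (arg_minnP (fun F : {set G} => #|F|) covC) => F /andP[FC FU] Fmin.
have hU : B * T t.+1 <= #|U|.
  move: Px; rewrite /= -/t (T_S ht) (cardsD1 x (Dset x)) -/U.
  by case: (x \in Dset x) => /=; lia.
have hFU : #|U| <= #|F| * (T t.+1).-1.
  apply: leq_trans (subset_leq_card FU) _; apply: leq_trans (card_bigcup_le _ _) _.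
  rewrite -sum_nat_const; apply: leq_sum => c cF.
  have := Csmall c (subsetP FC c cF); have := T_pos t.+1; lia.
have hB : B < #|F|.
  have := T_pos t.+1; move: hU hFU; move: (T t.+1) => m.
  have : 0 < B by rewrite /B; lia.
  case: m => // m; rewrite succnK; nia.
have priv : forall c, c \in F -> exists2 y, y \in U &
    (y \in Dset c) && [forall c' in F, (c' != c) ==> (y \notin Dset c')].
  move=> c cF.
  case: (boolP [exists y in U, (y \in Dset c) && [forall c' in F, (c' != c) ==> (y \notin Dset c')]])
     => [/exists_inP[y yU hy]|none]; first by exists y.
  exfalso.
  have covF' : cov (F :\ c).
    rewrite /= (subset_trans (subsetDl _ _) FC) /=.
    apply/subsetP => y yU; have := subsetP FU y yU; case/bigcupP => c0 c0F yc0.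
    case: (eqVneq c0 c) => [e0|nc0].
      have nh : ~~ ((y \in Dset c) && [forall c' in F, (c' != c) ==> (y \notin Dset c')]).
        by apply: contra none => h; apply/exists_inP; exists y.
      rewrite -e0 yc0 /= in nh; move/forall_inPn: nh => [c' c'F].
      rewrite negb_imply negbK e0 => /andP[nc' yc'].
      by apply/bigcupP; exists c' => //; rewrite !inE nc'.
    by apply/bigcupP; exists c0 => //; rewrite !inE nc0.
  have := Fmin _ covF'; rewrite (cardsD1 c F) cF /=; lia.
pose F' := F :\: X.
have hFX : #|F :&: X| < Dd.
  apply: leq_ltn_trans (hdeg x); apply: subset_leq_card; apply/subsetP => c.
  rewrite !inE => /andP[cF cX]; rewrite cX /=.
  by have := subsetP FC c cF; rewrite inE => /andP[].
have hF' : K0 <= #|F'| by rewrite /F'; have := cardsID X F; rewrite /B in hB; lia.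
pose qf c := odflt c [pick q | edesc c q && [exists y in U, (y \in Dset q) &&
                 [forall c' in F, (c' != c) ==> (y \notin Dset c')]]].
have qspec : forall c, c \in F' -> edesc c (qf c) /\
    exists2 y, y \in Dset (qf c) & forall c', c' \in F -> c' != c -> y \notin Dset c'.
  move=> c; rewrite inE => /andP[cnX cF]; have [y yU /andP[yc yp]] := priv c cF.
  have ync : y != c by apply: contraNneq cnX => <-; move: yc; rewrite inE => /andP[].
  have [q0 [e yq]] := Dset_split yc ync.
  rewrite /qf; case: pickP => [q /andP[eq /exists_inP[y' _ /andP[y'q y'p]]] | none].
    split => //; exists y' => // c' c'F nc'.
    by move/forall_inP: y'p => /(_ c' c'F) /implyP; apply.
  have hh : [exists y in U, (y \in Dset q0) &&
                 [forall c' in F, (c' != c) ==> (y \notin Dset c')]].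
    by apply/exists_inP; exists y => //; rewrite yq.
  by have := none q0; rewrite /= e hh.
have Fd : forall c, c \in F' -> dist c = t.+1.
  move=> c; rewrite inE => /andP[_ cF]; have := subsetP FC c cF.
  by rewrite inE => /andP[_ /eqP].
have Fx : forall c, c \in F' -> gE x c.
  move=> c; rewrite inE => /andP[_ cF]; have := subsetP FC c cF.
  by rewrite inE => /andP[].
have qd : forall c, c \in F' -> dist (qf c) = t.+2.
  by move=> c cF; have [/andP[_ /eqP ->] _] := qspec c cF; rewrite Fd.
exists x, F', qf; split => //; split.
  move=> c cF; have [/andP[e _] _] := qspec c cF; split => //; first exact: Fx.
    apply/negbTE/negP => e'; have := dist_edge r Gconn e'; rewrite qd // -/t; lia.
  by apply/eqP => e'; have := qd c cF; rewrite -e' -/t; lia.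
move=> c c' cF c'F; split.
  by apply/eqP => e'; have := qd c' c'F; rewrite -e' Fd //; lia.
move=> ncc'.
have [ec [y yq yp]] := qspec c cF.
have c'F0 : c' \in F by move: c'F; rewrite inE => /andP[].
split.
  apply/negP => e'.
  have ed : edesc c' (qf c) by rewrite /edesc gsym e' qd // Fd // eqxx.
  by have := subsetP (Dset_edge ed) y yq; apply/negP; apply: yp; rewrite // eq_sym.
apply/eqP => e'.
have [ec' _] := qspec c' c'F.
by have := subsetP (Dset_edge ec') y; rewrite -e' => /(_ yq); apply/negP; apply: yp; rewrite // eq_sym.
Qed.

Lemma lemL : K0 = 2 ^ (2 ^ (n + n) + 2 ^ (n + n)) -> #|X| < T 0.
Proof.
move=> hK; rewrite ltnNge; apply/negP => hX.
have [x [F [q [hF [hc hcc]]]]] := branching hX.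
have hs0 : 2 ^ (2 ^ (n + n) + 2 ^ (n + n)) <= size (enum F) by rewrite -cardE -hK.
have [t1 [b1 [st1 pt1 ht1]]] := @ramsey _ (fun c c' => gE c c') (2 ^ (n + n)) (enum F) hs0.
have [t2 [b2 [st2 pt2 ht2]]] := @ramsey _ (fun c c' => gE (q c) (q c')) n t1 ht1.
have pt2' : pairwise (fun c c' => gE c c' == b1) t2 := subseq_pairwise st2 pt1.
have ut2 : uniq t2 by apply: subseq_uniq (subseq_trans st2 st1) (enum_uniq _).
have inF : forall i : 'I_n, nth x t2 i \in F.
  move=> i; have hi : i < size t2 by apply: leq_trans (ltn_ord i) ht2.
  by rewrite -mem_enum; apply: (mem_subseq (subseq_trans st2 st1)); apply: mem_nth.
have szi : forall i : 'I_n, i < size t2 by move=> i; apply: leq_trans (ltn_ord i) ht2.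
have neqa : forall i j : 'I_n, i != j -> nth x t2 i != nth x t2 j.
  by move=> i j nij; rewrite nth_uniq.
pose a (i : 'I_n) := nth x t2 i.
have := @match_struct G n x a (fun i => q (a i)) b1 b2.
case.
- by move=> i; case: (hc _ (inF i)).
- by move=> i; case: (hc _ (inF i)).
- by move=> i; case: (hc _ (inF i)).
- move=> i j; case: (eqVneq i j) => [->|nij].
    by case: (hc _ (inF j)).
  have nji : j != i by rewrite eq_sym.
  rewrite gsym; have [_ h] := hcc _ _ (inF j) (inF i).
  by case: (h (neqa _ _ nji)) => -> _.
- by move=> i j; have [h _] := hcc _ _ (inF i) (inF j).
- by move=> i j nij; apply: (pw_nth (f := id)) => //.
- by move=> i j nij; exact: (@pw_nth G t2 q b2 x pt2 i j (szi i) (szi j) nij).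
- exact: noK1.
- by case=> h; [apply: noKs | apply: noCK].
Qed.

End LemL.

Lemma pw_lt (T : eqType) (rr : rel T) (s : seq T) x0 :
  pairwise rr s -> forall i j, i < j -> j < size s -> rr (nth x0 s i) (nth x0 s j).
Proof.
move=> /(pairwiseP x0) h i j lij hj; apply: h => //.
by rewrite inE; apply: ltn_trans lij hj.
Qed.

Definition gR z := 2 ^ (z + z).

Lemma ram_step (T : eqType) (rr : rel T) k (s : seq T) :
  gR k <= size s -> exists t (bb : bool), [/\ subseq t s, pairwise (fun x y => rr x y == bb) t & k <= size t].
Proof. exact: ramsey. Qed.

Section High.
Variable G : graph.
Variable n : nat.
Hypothesis noKs : ~ induced_sub (Kstar n) G.
Hypothesis noK1 : ~ induced_sub (K1star n) G.
Hypothesis noCK : ~ induced_sub (CK n) G.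
Hypothesis noK2 : ~ induced_sub (K2n n) G.
Variable u : G.

Definition W := [set y | multi_comp_nbhd y && gE u y].

Definition pf (v : G) := odflt v [pick p | (p \in nbhd v) && ~~ connect (nbhd_rel v) u p].

Lemma nbhd_rel_sym (v : G) : symmetric (nbhd_rel v).
Proof. by move=> x y; rewrite /nbhd_rel gsym; case: (x \in nbhd v); case: (y \in nbhd v); rewrite /= ?andbF. Qed.

Lemma pf_spec v : v \in W -> (pf v \in nbhd v) && ~~ connect (nbhd_rel v) u (pf v).
Proof.
rewrite inE => /andP[/existsP[a /existsP[b /and3P[ha hb nab]]] uv].
rewrite /pf; case: pickP => [p //|none] /=; exfalso.
have hu : u \in nbhd v by rewrite inE gsym.
have ca : connect (nbhd_rel v) u a by apply/negPn; have := none a; rewrite ha /= => /negbT.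
have cb : connect (nbhd_rel v) u b by apply/negPn; have := none b; rewrite hb /= => /negbT.
move/negP: nab; apply; apply: connect_trans cb; rewrite (sym_connect_sym (@nbhd_rel_sym v)).
exact: ca.
Qed.

Lemma P1 v : v \in W -> gE v (pf v).
Proof. by move/pf_spec; rewrite inE => /andP[]. Qed.

Lemma P2 v : v \in W -> pf v != u.
Proof. by move/pf_spec => /andP[_]; apply: contraNneq => ->; rewrite connect0. Qed.

Lemma uW v : v \in W -> gE u v.
Proof. by rewrite inE => /andP[]. Qed.

Lemma P3 v : v \in W -> gE u (pf v) = false.
Proof.
move=> vW; have /andP[hp nc] := pf_spec vW; apply/negbTE; apply: contra nc => e.
by apply: connect1; rewrite /nbhd_rel e hp inE gsym uW.
Qed.

Lemma P4 v w : v \in W -> gE v w -> gE u w -> gE w (pf v) = false /\ w != pf v.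
Proof.
move=> vW vw uw; have /andP[hp nc] := pf_spec vW.
have cw : connect (nbhd_rel v) u w.
  by apply: connect1; rewrite /nbhd_rel uw !inE vw gsym uW.
split.
  apply/negbTE; apply: contra nc => e; apply: connect_trans cw _; apply: connect1.
  by rewrite /nbhd_rel e inE vw.
by apply: contra nc => /eqP <-.
Qed.

Lemma P5 v : v \in W -> v != pf v.
Proof. by move/P1/gE_neq. Qed.

Definition Rs := iter 5 gR n.+1.

Lemma highdeg : Rs <= #|W| -> False.
Proof.
move=> hW.
have h0 : gR (iter 4 gR n.+1) <= size (enum W) by rewrite -cardE.
have [t1 [b1 [st1 pt1 ht1]]] := ram_step (fun v w => gE v w) h0.
have [t2 [b2 [st2 pt2 ht2]]] := ram_step (fun v w => gE (pf v) (pf w)) ht1.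
have [t3 [b3 [st3 pt3 ht3]]] := ram_step (fun v w => pf v == pf w) ht2.
have [t4 [b4 [st4 pt4 ht4]]] := ram_step (fun v w => gE (pf v) w) ht3.
have [t [b5 [st5 pt5 ht]]] := ram_step (fun v w => gE (pf w) v) ht4.
have sub4 : subseq t t4 := st5.
have sub3 : subseq t t3 := subseq_trans sub4 st4.
have sub2 : subseq t t2 := subseq_trans sub3 st3.
have sub1 : subseq t t1 := subseq_trans sub2 st2.
have sub0 : subseq t (enum W) := subseq_trans sub1 st1.
have q1 : pairwise (fun v w => gE v w == b1) t := subseq_pairwise sub1 pt1.
have q2 : pairwise (fun v w => gE (pf v) (pf w) == b2) t := subseq_pairwise sub2 pt2.
have q3 : pairwise (fun v w => (pf v == pf w) == b3) t := subseq_pairwise sub3 pt3.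
have q4 : pairwise (fun v w => gE (pf v) w == b4) t := subseq_pairwise sub4 pt4.
have q5 : pairwise (fun v w => gE (pf w) v == b5) t := pt5.
have ut : uniq t by apply: subseq_uniq sub0 (enum_uniq _).
have inW : forall i, i < size t -> nth u t i \in W.
  by move=> i hi; rewrite -mem_enum; apply: (mem_subseq sub0); apply: mem_nth.
pose w i := nth u t i.
have Haa : forall i j, i < size t -> j < size t -> gE (w i) (w j) = b1 && (i != j).
  move=> i j hi hj; case: (eqVneq i j) => [->|nij]; first by rewrite gE_irr andbF.
  by rewrite andbT; apply: (@pw_nth G t id b1 u q1).
have Hbb : forall i j, i < size t -> j < size t -> i != j -> gE (pf (w i)) (pf (w j)) = b2.
  by move=> i j hi hj nij; apply: (@pw_nth G t pf b2 u q2).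
have winj : forall i j, i < size t -> j < size t -> w i = w j -> i = j.
  by move=> i j hi hj e; apply/eqP; rewrite -(nth_uniq u hi hj ut); apply/eqP; exact: e.
have szi : forall i : 'I_n, i < size t by move=> i; apply: leq_trans ht; apply: leqW.
have szS : forall i : 'I_n, i.+1 < size t by move=> i; apply: leq_trans ht; rewrite ltnS; exact: ltn_ord i.
have wW : forall i, i < size t -> w i \in W by move=> i; apply: inW.
have fin : induced_sub (K1star n) G \/ induced_sub (Kstar n) G \/ induced_sub (CK n) G -> False.
  by case=> [h|[h|h]]; [apply: noK1 | apply: noKs | apply: noCK].
clear pt1 pt2 pt3 pt4 pt5.
case: b1 Haa q1 => Haa q1.
-
  apply: fin; apply: (@match_struct G n u (fun i => w i) (fun i => pf (w i)) true b2).
  + by move=> i; apply: uW; apply: wW.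
  + by move=> i; apply: P3; apply: wW.
  + by move=> i; rewrite eq_sym; apply: P2; apply: wW.
  + move=> i j; case: (eqVneq i j) => [->|nij]; first by rewrite P1 ?eqxx // wW.
    have hji : gE (w j) (w i) by rewrite Haa //; apply: contraNneq nij => /ord_inj ->.
    have [h1 h2] := P4 (wW _ (szi j)) hji (uW (wW _ (szi i))).
    by rewrite h1 ?(negbTE nij).
  + move=> i j; case: (eqVneq i j) => [->|nij]; first by apply: P5; apply: wW.
    have hji : gE (w j) (w i) by rewrite Haa //; apply: contraNneq nij => /ord_inj ->.
    by have [h1 h2] := P4 (wW _ (szi j)) hji (uW (wW _ (szi i))).
  + by move=> i j nij; rewrite Haa //; apply: contraNneq nij => /ord_inj ->.
  + by move=> i j nij; apply: Hbb.
- have hpos : 0 < size t by apply: leq_trans ht.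
  have Hww : forall i j, i < size t -> j < size t -> gE (w i) (w j) = false.
    by move=> i j hi hj; rewrite Haa.
  case: b3 q3 => q3.
  +
    apply: noK2; apply: (@K2n_emb G n u (pf (w 0)) (fun i => w i)).
    * by apply: P3; apply: wW.
    * by rewrite eq_sym; apply: P2; apply: wW.
    * by move=> i; apply: uW; apply: wW.
    * move=> i; case: (posnP i) => [->|ip]; first by rewrite gsym P1 // wW.
      have := @pw_lt _ _ t u q3 0 i ip (szi i); rewrite eqb_id => /eqP ->.
      by rewrite gsym P1 // wW.
    * by move=> i j; apply: Hww.
    * by move=> i j /winj; move=> h; apply: ord_inj; apply: h.
  case: b4 q4 => q4.
  + apply: noK2; apply: (@K2n_emb G n u (pf (w 0)) (fun i => w i.+1)).
    * by apply: P3; apply: wW.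
    * by rewrite eq_sym; apply: P2; apply: wW.
    * by move=> i; apply: uW; apply: wW; apply: szS.
    * move=> i; have := @pw_lt _ _ t u q4 0 i.+1 isT (szS i).
      by rewrite eqb_id.
    * by move=> i j; apply: Hww; apply: szS.
    * move=> i j /winj h; apply: ord_inj.
      by have := h (szS i) (szS j); case.
  case: b5 q5 => q5.
  + apply: noK2; apply: (@K2n_emb G n u (pf (w n)) (fun i => w i)).
    * by apply: P3; apply: wW.
    * by rewrite eq_sym; apply: P2; apply: wW.
    * by move=> i; apply: uW; apply: wW.
    * move=> i; have := @pw_lt _ _ t u q5 i n (ltn_ord i) ht.
      by rewrite eqb_id.
    * by move=> i j; apply: Hww.
    * by move=> i j /winj; move=> h; apply: ord_inj; apply: h.
  apply: fin; apply: (@match_struct G n u (fun i => w i) (fun i => pf (w i)) false b2).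
  + by move=> i; apply: uW; apply: wW.
  + by move=> i; apply: P3; apply: wW.
  + by move=> i; rewrite eq_sym; apply: P2; apply: wW.
  + move=> i j; case: (ltngtP i j) => [lij|lji|/ord_inj ->].
    * have := @pw_lt _ _ t u q5 i j lij (szi j); rewrite gsym => /eqP ->.
      by apply/esym/eqP => e; move: lij; rewrite e ltnn.
    * have := @pw_lt _ _ t u q4 j i lji (szi i); rewrite gsym => /eqP ->.
      by apply/esym/eqP => e; move: lji; rewrite e ltnn.
    * by rewrite eqxx P1 // wW.
  + move=> i j; apply/eqP => e.
    have := P1 (wW _ (szi j)); rewrite -e Hww //.
  + by move=> i j nij; rewrite Hww.
  + by move=> i j nij; apply: Hbb.
Qed.

End High.

Lemma hard n : exists c, forall G : graph, connected G ->
  ~ induced_sub (Pn n) G -> ~ induced_sub (Kstar n) G -> ~ induced_sub (K1star n) G ->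
  ~ induced_sub (K2n n) G -> ~ induced_sub (CK n) G ->
  #|[set v : G | multi_comp_nbhd v]| < c.
Proof.
exists (T n (Rs n) (2 ^ (2 ^ (n + n) + 2 ^ (n + n))) 0).
move=> G Gc noP noKs noK1 noK2 noCK.
case: (boolP [exists u : G, Rs n <= #|W u|]) => [/existsP[u hu]|hno].
  by exfalso; apply: (highdeg noKs noK1 noCK noK2 hu).
have hdeg : forall x : G, #|[set y in [set v : G | multi_comp_nbhd v] | gE x y]| < Rs n.
  move=> x; have -> : [set y in [set v : G | multi_comp_nbhd v] | gE x y] = W x.
    by apply/setP => y; rewrite !inE.
  by rewrite ltnNge; apply: contra hno => h; apply/existsP; exists x.
case: (set_0Vmem [set v : G | multi_comp_nbhd v]) => [->|[r rS]].
  by rewrite cards0 T_pos.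
exact: (lemL r Gc hdeg noP noKs noK1 noCK (erefl _)).
Qed.

Lemma mcn1 (G : graph) (v a b : G) :
  gE v a -> gE v b -> a != b -> (forall y, gE v y -> gE a y = false) -> multi_comp_nbhd v.
Proof.
move=> va vb nab ha; apply/existsP; exists a; apply/existsP; exists b.
rewrite !inE va vb /=; apply/negP => /connectP[[|y p] /= pth]; first by move=> e; rewrite e eqxx in nab.
case/andP: pth => /and3P[e _ yv] _ _.
by move: yv; rewrite inE => /ha; rewrite e.
Qed.

Lemma conn_hub (G : graph) (h : G) : (forall x, connect (@gE G) h x) -> connected G.
Proof.
move=> hx x y; apply: connect_trans (hx y).
by rewrite (sym_connect_sym (@gsym G)).
Qed.

Lemma other m (i : 'I_m) : 1 < m -> exists j : 'I_m, j != i.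
Proof.
move=> hm; case: (eqVneq (nat_of_ord i) 0) => [i0|i0].
  by exists (Ordinal hm); apply/eqP => e; move: i0; rewrite -e.
have h0 : 0 < m by apply: ltnW.
by exists (Ordinal h0); apply/eqP => e; move: i0; rewrite -e.
Qed.

Section Cnt.
Variable c : nat.
Local Notation m := c.+2.

Definition Sset (G : graph) := [set v : G | multi_comp_nbhd v].

Lemma Kstar_ok : connected (Kstar m) /\ c <= #|Sset (Kstar m)|.
Proof.
split.
  apply: (@conn_hub (Kstar m) (inl ord0)) => -[i|i].
    case: (eqVneq i ord0) => [->|ni]; first exact: connect0.
    by apply: connect1; rewrite /= /sgrel /= eq_sym ni.
  apply: (@connect_trans _ _ (inl i : Kstar m)).
    case: (eqVneq i ord0) => [->|ni]; first exact: connect0.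
    by apply: connect1; rewrite /= /sgrel /= eq_sym ni.
  by apply: connect1; rewrite /= /sgrel /= eqxx.
suff hsub : [set inl i | i : 'I_m] \subset Sset (Kstar m).
  have := subset_leq_card hsub; rewrite card_imset ?card_ord.
    by move=> h; apply: leq_trans h; apply: leqW (leqnSn c).
  by move=> x y [].
apply/subsetP => v /imsetP[i _ ->]; rewrite inE.
have [j ji] := other i (isT : 1 < m).
apply: (@mcn1 (Kstar m) (inl i) (inr i) (inl j)).
- by rewrite /= /sgrel /= eqxx.
- by rewrite /= /sgrel /= eq_sym ji.
- by [].
- case=> k; rewrite /= /sgrel /= ?inl_eq ?inr_eq.
  + by rewrite eq_sym andbT => /negbTE.
  + by move=> _; case: (_ != _).
Qed.

Lemma K1star_ok : connected (K1star m) /\ c <= #|Sset (K1star m)|.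
Proof.
split.
  apply: (@conn_hub (K1star m) None) => -[[i|i]|]; last exact: connect0.
    by apply: connect1.
  apply: (@connect_trans _ _ (Some (inl i) : K1star m)); first by apply: connect1.
  by apply: connect1; rewrite /= /sgrel /= eqxx.
suff hsub : [set Some (inl i) | i : 'I_m] \subset Sset (K1star m).
  have := subset_leq_card hsub; rewrite card_imset ?card_ord.
    by move=> h; apply: leq_trans h; apply: leqW (leqnSn c).
  by move=> x y [].
apply/subsetP => v /imsetP[i _ ->]; rewrite inE.
apply: (@mcn1 (K1star m) (Some (inl i)) None (Some (inr i))).
- by [].
- by rewrite /= /sgrel /= eqxx.
- by [].
- by case=> [[k|k]|]; rewrite /= /sgrel /= ?some_eq ?inl_eq ?inr_eq; do ?[case: (_ != _)|case: (_ == _)].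
Qed.


Lemma K2n_ok : connected (K2n m) /\ c <= #|Sset (K2n m)|.
Proof.
split.
  apply: (@conn_hub (K2n m) (inl ord0)) => -[k|j]; last by apply: connect1.
  apply: (@connect_trans _ _ (inr ord0 : K2n m)); first by apply: connect1.
  by apply: connect1.
suff hsub : [set inr i | i : 'I_m] \subset Sset (K2n m).
  have := subset_leq_card hsub; rewrite card_imset ?card_ord.
    by move=> h; apply: leq_trans h; apply: leqW (leqnSn c).
  by move=> x y [].
apply/subsetP => v /imsetP[i _ ->]; rewrite inE.
apply: (@mcn1 (K2n m) (inr i) (inl ord0) (inl ord_max)).
- by [].
- by [].
- by [].
- by case=> k; rewrite /= /sgrel /= ?inl_eq ?inr_eq; do ?[case: (_ != _)|case: (_ == _)].
Qed.

Lemma CK_ok : connected (CK m) /\ c <= #|Sset (CK m)|.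
Proof.
split.
  apply: (@conn_hub (CK m) (inl ord0)) => -[i|i].
    case: (eqVneq i ord0) => [->|ni]; first exact: connect0.
    by apply: connect1; rewrite /= /sgrel /= eq_sym ni.
  apply: (@connect_trans _ _ (inl i : CK m)).
    case: (eqVneq i ord0) => [->|ni]; first exact: connect0.
    by apply: connect1; rewrite /= /sgrel /= eq_sym ni.
  by apply: connect1; rewrite /= /sgrel /= eqxx.
suff hsub : [set inl i | i : 'I_m] \subset Sset (CK m).
  have := subset_leq_card hsub; rewrite card_imset ?card_ord.
    by move=> h; apply: leq_trans h; apply: leqW (leqnSn c).
  by move=> x y [].
apply/subsetP => v /imsetP[i _ ->]; rewrite inE.
have [j ji] := other i (isT : 1 < m).
apply: (@mcn1 (CK m) (inl i) (inr i) (inl j)).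
- by rewrite /= /sgrel /= eqxx.
- by rewrite /= /sgrel /= eq_sym ji.
- by [].
- case=> k; rewrite /= /sgrel /= ?inl_eq ?inr_eq; by case: (eqVneq i k).
Qed.

Lemma Tn_ok : connected (Tn m) /\ c <= #|Sset (Tn m)|.
Proof.
split.
  apply: (@conn_hub (Tn m) None) => -[[k|j]|]; last exact: connect0.
    2: by apply: connect1.
  apply: (@connect_trans _ _ (Some (inr ord0) : Tn m)); first by apply: connect1.
  by apply: connect1.
suff hsub : [set Some (inr i) | i : 'I_m] \subset Sset (Tn m).
  have := subset_leq_card hsub; rewrite card_imset ?card_ord.
    by move=> h; apply: leq_trans h; apply: leqW (leqnSn c).
  by move=> x y [].
apply/subsetP => v /imsetP[i _ ->]; rewrite inE.
apply: (@mcn1 (Tn m) (Some (inr i)) None (Some (inl i))).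
- by [].
- by [].
- by [].
- by case=> [[k|k]|]; rewrite /= /sgrel /= ?some_eq ?inl_eq ?inr_eq; do ?[case: (_ != _)|case: (_ == _)].
Qed.

Lemma Pn_E (x y : Pn m) : gE x y = ((nat_of_ord y == (nat_of_ord x).+1) || (nat_of_ord x == (nat_of_ord y).+1)).
Proof.
rewrite /= /sgrel /P_r; case: (eqVneq x y) => [->|nxy] //=.
by apply/esym/negbTE; rewrite negb_or; apply/andP; split; apply/eqP; lia.
Qed.

Lemma Pn_ok : connected (Pn m) /\ c <= #|Sset (Pn m)|.
Proof.
split.
  have h : forall k (hk : k < m), connect (@gE (Pn m)) ord0 (Ordinal hk).
    elim=> [|k IH] hk.
      by have -> : Ordinal hk = ord0 by apply: val_inj.
    apply: connect_trans (IH (ltnW hk)) _; apply: connect1.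
    by rewrite Pn_E /= eqxx.
  by apply: (@conn_hub (Pn m) ord0) => -[k hk]; apply: h.
suff hsub : [set (inord k.+1 : 'I_m) | k : 'I_c] \subset Sset (Pn m).
  have := subset_leq_card hsub; rewrite card_imset ?card_ord //.
  move=> x y /(congr1 (@nat_of_ord _)); rewrite !inordK; last 2 first.
  - by have := ltn_ord y; lia.
  - by have := ltn_ord x; lia.
  by case=> /ord_inj.
apply/subsetP => v /imsetP[k _ ->]; rewrite inE.
have hk := ltn_ord k.
apply: (@mcn1 (Pn m) (inord k.+1) (inord k) (inord k.+2)).
- by rewrite Pn_E !inordK ?eqxx ?orbT //; lia.
- by rewrite Pn_E !inordK ?eqxx //; lia.
- apply/eqP => /(congr1 (@nat_of_ord _)); rewrite !inordK; lia.
- move=> y; rewrite !Pn_E !inordK; lia.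
Qed.

End Cnt.

Unset Implicit Arguments.
Theorem theorem1p6 (H : gfamily) :
  (exists c : nat, forall G : graph, connected G -> Hfree H G ->
      #|[set v : G | multi_comp_nbhd v]| < c)
  <->
  (exists n : nat, 0 < n /\ family_le H (special_family n)).
Proof.
split.
- move=> [c hc]; exists c.+2; split => //.
  have key : forall Gs : graph, connected Gs /\ c <= #|Sset Gs| ->
      exists2 H1, H H1 & induced_sub H1 Gs.
    move=> Gs [cs hs]; apply: NNPP => nE.
    have fr : Hfree H Gs by move=> H0 HH0 ind; apply: nE; exists H0.
    by have := hc Gs cs fr; rewrite ltnNge hs.
  move=> H2 [->|[->|[->|[->|[->|->]]]]]; apply: key.
  + exact: Kstar_ok.
  + exact: K1star_ok.
  + exact: Pn_ok.
  + exact: K2n_ok.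
  + exact: CK_ok.
  + exact: Tn_ok.
- move=> [n [n0 hle]]; have [c hc] := hard n; exists c => G Gc Gf.
  have no : forall F, special_family n F -> ~ induced_sub F G.
    move=> F hF ind; have [H1 HH1 sub] := hle F hF.
    exact: (Gf H1 HH1 (induced_trans sub ind)).
  apply: hc => //; apply: no; rewrite /special_family; tauto.
Qed.
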